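(* Let $G=(V,E)$ be a graph and $v\in V$. Then $v\in \mathrm{anticore}(G)$ if and only if $\gamma(G_v+u)=\gamma(G)+1$.
   Context: All graphs are finite, simple and undirected. A set $S\subseteq V$ is dominating if every vertex of $V$ is in $S$ or adjacent to a vertex of $S$; $\gamma(G)$ is the minimum size of a dominating set, and a minimum dominating set (mds, or $\gamma$-set) is a dominating set of size $\gamma(G)$. $\mathrm{core}(G)$ is the set of vertices belonging to every mds of $G$, $\mathrm{corona}(G)$ is the set of vertices belonging to at least one mds of $G$, and $\mathrm{anticore}(G)=V\setminus \mathrm{corona}(G)$. For $v\in V$, $G_v+u$ denotes the graph obtained from $G$ by adding one new vertex $u$ and the single edge $uv$. *)

(* Defs.v *)
(* A finite simple graph is a symmetric irreflexive
   relation e on a finType T (vertex set = T). *)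
From mathcomp Require Import all_boot.
Set Implicit Arguments. Unset Strict Implicit. Unset Printing Implicit Defensive.

Definition dominating (T : finType) (e : rel T) (S : {set T}) : bool :=
  [forall x, (x \in S) || [exists y in S, e y x]].

(* domination number: minimum size of a dominating set
   (the full vertex set is always dominating, bound #|T|). *)
Definition gamma (T : finType) (e : rel T) : nat :=
  \big[minn/#|T|]_(S : {set T} | dominating e S) #|S|.

Definition mds (T : finType) (e : rel T) (S : {set T}) : bool :=
  dominating e S && (#|S| == gamma e).

Definition corona (T : finType) (e : rel T) : {set T} :=
  [set v | [exists S : {set T}, mds e S && (v \in S)]].

Definition anticore (T : finType) (e : rel T) : {set T} := ~: corona e.

(* G_v + u : vertex type option T, new vertex u = None, adjacent only to v. *)
Definition addleaf (T : finType) (e : rel T) (v : T) : rel (option T) :=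
  fun a b => match a, b with
             | Some x, Some y => e x y
             | None, Some y => y == v
             | Some x, None => x == v
             | None, None => false
             end.

(* Main.v *)
Require Import Defs.
From mathcomp Require Import all_boot.

Section G.
Variables (T : finType) (e : rel T).

Lemma gamma_le S : dominating e S -> gamma e <= #|S|.
Proof.
move=> hS; rewrite /gamma.
have: S \in index_enum {set T} by rewrite /index_enum -enumT mem_enum.
elim: (index_enum _) => [//|a r IH]; rewrite inE big_cons => /orP [/eqP <-|h].
  by rewrite hS geq_minl.
by case: ifP => _; [apply: leq_trans (geq_minr _ _) _|]; apply: IH.
Qed.

Lemma gamma_attain : exists S, dominating e S /\ #|S| = gamma e.
Proof.
rewrite /gamma; apply: (big_ind (fun n => exists S, dominating e S /\ #|S| = n)).
- exists setT; split; last by rewrite cardsT.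
  by apply/forallP => x; rewrite in_setT.
- move=> x y [S1 [h1 e1]] [S2 [h2 e2]]; rewrite /minn; case: ltnP => _.
  + by exists S1. + by exists S2.
- by move=> S hS; exists S.
Qed.
End G.
Arguments gamma_le {T e S}.

Theorem theorem3 (T : finType) (e : rel T) (esym : symmetric e)
  (eirr : irreflexive e) (v : T) :
  v \in anticore e <-> gamma (addleaf e v) = (gamma e + 1)%N.
Proof.
set e' := addleaf e v.
have [S0 [dS0 cS0]] := @gamma_attain _ e.
have up : gamma e' <= gamma e + 1.
  pose S' := Some @: S0 :|: [set None].
  have dS' : dominating e' S'.
    apply/forallP => [[x|]]; last by rewrite !inE eqxx orbT.
    have /forallP /(_ x) /orP [hx|/existsP [y /andP [hy hyx]]] := dS0.
      by apply/orP; left; rewrite !inE; apply/orP; left; apply/imsetP; exists x.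
    apply/orP; right; apply/existsP; exists (Some y).
    by rewrite /e' /= hyx andbT !inE; apply/orP; left; apply/imsetP; exists y.
  apply: leq_trans (gamma_le dS') _.
  rewrite -cS0; apply: leq_trans (leq_card_setU _ _) _.
  by rewrite card_imset ?cards1 //; exact: Some_inj.
have proj : forall S', dominating e' S' -> exists S, [/\ dominating e S,
    #|S| <= #|S'| & v \in S].
  move=> S' dS'.
  pose p := fun y : option T => if y is Some x then x else v.
  exists [set p y | y in S']; split; [|exact: leq_imset_card|].
  - apply/forallP => x.
    have /forallP /(_ (Some x)) /orP [hx|/existsP [[y|] /andP [hy hyx]]] := dS'.
    + by apply/orP; left; apply/imsetP; exists (Some x).
    + by apply/orP; right; apply/existsP; exists y; rewrite andbC; move: hyx; rewrite /e' /= => ->;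
        apply/imsetP; exists (Some y).
    + by apply/orP; left; rewrite /e' /= in hyx; rewrite (eqP hyx);
        apply/imsetP; exists None.
  - have /forallP /(_ None) /orP [hx|/existsP [[y|] /andP [hy hyx]]] := dS'.
    + by apply/imsetP; exists None.
    + by rewrite /e' /= in hyx; rewrite -(eqP hyx); apply/imsetP; exists (Some y).
    + by [].
have low : gamma e <= gamma e'.
  have [S' [dS' cS']] := @gamma_attain _ e'.
  have [S [dS cS _]] := proj S' dS'.
  by rewrite -cS'; apply: leq_trans (gamma_le dS) cS.
split.
- move=> hv; apply/eqP; rewrite eqn_leq up /=; rewrite addn1 ltn_neqAle low andbT.
  apply/negP => /eqP heq; move: hv; rewrite /anticore inE => /negP; apply.
  have [S' [dS' cS']] := @gamma_attain _ e'.
  have [S [dS cS vS]] := proj S' dS'.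
  rewrite inE; apply/existsP; exists S; rewrite vS andbT /mds dS /=.
  by rewrite eqn_leq gamma_le // andbT cS' -heq in cS *; rewrite cS.
- move=> heq; rewrite /anticore inE; apply/negP; rewrite inE => /existsP [S /andP [/andP [dS /eqP cS] vS]].
  have dS' : dominating e' (Some @: S).
    apply/forallP => [[x|]].
    + have /forallP /(_ x) /orP [hx|/existsP [y /andP [hy hyx]]] := dS.
        by apply/orP; left; apply/imsetP; exists x.
      apply/orP; right; apply/existsP; exists (Some y).
      by rewrite /e' /= hyx andbT; apply/imsetP; exists y.
    + apply/orP; right; apply/existsP; exists (Some v).
      by rewrite /e' /= eqxx andbT; apply/imsetP; exists v.
  have := gamma_le dS'; rewrite card_imset; last exact: Some_inj.
  by rewrite cS heq addn1 ltnn.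
Qed.
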